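(* Let $N>0$ and $\tau\in(0,1)$, and let $(v_1,v_2)$ be a radial solution of $(P)_\tau$ (as described in the context). For every $0<r_0<R_0$ there exist a constant $C_0=C_0(\tau,N,R_0/r_0)>0$ and $\gamma=\gamma(R_0/r_0)\in(0,1)$ (depending only on the indicated quantities) such that $$\max_{[r_0,R_0]}v_1\le\gamma\min_{[r_0,R_0]}v_1+2(N+1)(\gamma-1)\log r_0+C_0,$$ $$\max_{[r_0,R_0]}v_2\le\gamma\min_{[r_0,R_0]}v_2+2(\gamma-1)\log r_0+C_0.$$
   Context: A radial solution of $(P)_\tau$ is a pair $v_1,v_2\in C([0,\infty))\cap C^2((0,\infty))$ with, for $r>0$, $$-(rv_1')'=r^{2N+1}e^{v_1}-\tau re^{v_2},\qquad -(rv_2')'=re^{v_2}-\tau r^{2N+1}e^{v_1},$$ $v_1'(0)=v_2'(0)=0$, $$\beta_1=\int_0^\infty r^{2N+1}e^{v_1}\,dr<\infty,\qquad \beta_2=\int_0^\infty re^{v_2}\,dr<\infty,$$ and $\lim_{r\to\infty}rv_1'(r)=-(\beta_1-\tau\beta_2)$, $\lim_{r\to\infty}rv_2'(r)=-(\beta_2-\tau\beta_1)$. *)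

(* Defs.v *)
From Stdlib Require Import Reals.
From Coquelicot Require Import Coquelicot.
Open Scope R_scope.

Definition C2_pos (v d dd : R -> R) : Prop :=
  forall r, 0 < r ->
    is_derive v r (d r) /\ is_derive d r (dd r) /\ continuous dd r.

Definition C0_nonneg (v : R -> R) : Prop :=
  filterlim v (at_right 0) (locally (v 0)) /\
  (forall r, 0 < r -> continuous v r).

Definition deriv0_zero (v : R -> R) : Prop :=
  filterlim (fun r => (v r - v 0) / r) (at_right 0) (locally 0).

Definition radial_solution (N tau : R) (v1 v2 : R -> R) : Prop :=
  C0_nonneg v1 /\ C0_nonneg v2 /\
  exists (d1 dd1 d2 dd2 : R -> R) (beta1 beta2 : R),
    C2_pos v1 d1 dd1 /\ C2_pos v2 d2 dd2 /\
    (forall r, 0 < r ->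
       - (d1 r + r * dd1 r) = Rpower r (2 * N + 1) * exp (v1 r) - tau * r * exp (v2 r)) /\
    (forall r, 0 < r ->
       - (d2 r + r * dd2 r) = r * exp (v2 r) - tau * Rpower r (2 * N + 1) * exp (v1 r)) /\
    deriv0_zero v1 /\ deriv0_zero v2 /\
    is_RInt_gen (fun r => Rpower r (2 * N + 1) * exp (v1 r))
      (at_right 0) (Rbar_locally p_infty) beta1 /\
    is_RInt_gen (fun r => r * exp (v2 r))
      (at_right 0) (Rbar_locally p_infty) beta2 /\
    filterlim (fun r => r * d1 r) (Rbar_locally p_infty)
      (locally (- (beta1 - tau * beta2))) /\
    filterlim (fun r => r * d2 r) (Rbar_locally p_infty)
      (locally (- (beta2 - tau * beta1))).

Definition maxOn (v : R -> R) (a b : R) : R :=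
  real (Lub_Rbar (fun y => exists x, a <= x <= b /\ y = v x)).
Definition minOn (v : R -> R) (a b : R) : R :=
  real (Glb_Rbar (fun y => exists x, a <= x <= b /\ y = v x)).

(* Main.v *)
Require Import Defs.
From Stdlib Require Import Reals Lra Psatz.
From Coquelicot Require Import Coquelicot.
Open Scope R_scope.
Lemma ball_R (x e y : R) : ball x e y <-> Rabs (y - x) < e.
Proof. reflexivity. Qed.
Lemma ball_Rb (x e y : R) : ball x e y -> x - e < y < x + e.
Proof. intro H. change (Rabs (y - x) < e) in H. apply Rabs_def2 in H. lra. Qed.
Lemma lim_le_const {T} (F : (T->Prop)->Prop) {PF: ProperFilter F} (g:T->R) L c :
  filterlim g F (locally L) -> F (fun x => g x <= c) -> L <= c.
Proof.
intros Hl Hc. destruct (Rle_lt_dec L c) as [h|h]; auto. exfalso.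
assert (He: 0 < L - c) by lra.
pose proof (proj1 (filterlim_locally g L) Hl (mkposreal _ He)) as Hb.
destruct (filter_ex _ (filter_and _ _ Hb Hc)) as [x [H1 H2]].
apply ball_Rb in H1. simpl in H1. lra.
Qed.
Lemma lim_ge_const {T} (F : (T->Prop)->Prop) {PF: ProperFilter F} (g:T->R) L c :
  filterlim g F (locally L) -> F (fun x => c <= g x) -> c <= L.
Proof.
intros Hl Hc. destruct (Rle_lt_dec c L) as [h|h]; auto. exfalso.
assert (He: 0 < c - L) by lra.
pose proof (proj1 (filterlim_locally g L) Hl (mkposreal _ He)) as Hb.
destruct (filter_ex _ (filter_and _ _ Hb Hc)) as [x [H1 H2]].
apply ball_Rb in H1. simpl in H1. lra.
Qed.
Lemma rint_gen_ge (f : R -> R) (beta a b : R) :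
  is_RInt_gen f (at_right 0) (Rbar_locally p_infty) beta ->
  (forall x, 0 < x -> 0 <= f x) -> 0 < a <= b -> ex_RInt f a b -> RInt f a b <= beta.
Proof.
intros H Hp Hab Hex.
destruct (Rle_lt_dec (RInt f a b) beta) as [h|h]; auto. exfalso.
assert (He: 0 < RInt f a b - beta) by lra.
assert (Hb := H (ball beta (mkposreal _ He)) (locally_ball _ _)).
unfold filtermapi in Hb. simpl in Hb.
assert (Hd : filter_prod (at_right 0) (Rbar_locally p_infty)
   (fun ab : R*R => 0 < fst ab < a /\ b < snd ab)).
{ apply Filter_prod with (fun x => 0 < x < a) (fun y => b < y).
  - exists (mkposreal _ (proj1 Hab)). intros y Hy Hy0. apply ball_Rb in Hy. simpl in *. lra.
  - exists b. auto.
  - intros x y Hx Hy. simpl. auto. }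
destruct (filter_ex _ (filter_and _ _ Hb Hd)) as [[x y] [[y0 [Hi Hy0]] [Hx Hy]]].
simpl in *. apply ball_Rb in Hy0.
assert (Exy : ex_RInt (V:=R_CompleteNormedModule) f x y) by (exists y0; exact Hi).
assert (Hi2 : RInt f x y = y0) by (apply is_RInt_unique; exact Hi).
assert (E1 : ex_RInt (V:=R_CompleteNormedModule) f x a) by (apply ex_RInt_Chasles_1 with y; auto; lra).
assert (E2 : ex_RInt (V:=R_CompleteNormedModule) f a y) by (apply ex_RInt_Chasles_2 with x; auto; lra).
assert (E3 : ex_RInt (V:=R_CompleteNormedModule) f b y) by (apply ex_RInt_Chasles_2 with a; auto; lra).
assert (C1 := RInt_Chasles f x a y E1 E2).
assert (C2 := RInt_Chasles f a b y Hex E3).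
assert (P1 : 0 <= RInt f x a) by (apply RInt_ge_0; auto; try lra; intros; apply Hp; lra).
assert (P2 : 0 <= RInt f b y) by (apply RInt_ge_0; auto; try lra; intros; apply Hp; lra).
change plus with Rplus in C1, C2. lra.
Qed.

Lemma rint_gen_nonneg (f : R -> R) (beta : R) :
  is_RInt_gen f (at_right 0) (Rbar_locally p_infty) beta ->
  (forall x, 0 < x -> 0 <= f x) -> (forall x, 0 < x -> continuous f x) -> 0 <= beta.
Proof.
intros H Hp Hc.
assert (E : ex_RInt (V:=R_CompleteNormedModule) f 1 2).
{ apply ex_RInt_continuous. intros z Hz. apply Hc.
  rewrite Rmin_left in Hz; lra. }
apply Rle_trans with (RInt f 1 2).
- apply RInt_ge_0; auto; try lra. intros; apply Hp; lra.
- apply rint_gen_ge; auto; lra.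
Qed.

Lemma ftc_le (P g : R -> R) (b e T : R) :
  (forall x, 0 < x -> is_derive P x (g x)) -> (forall x, 0 < x -> continuous g x) ->
  (forall x, 0 < x -> 0 <= g x) ->
  is_RInt_gen g (at_right 0) (Rbar_locally p_infty) b -> 0 < e <= T ->
  P T - P e <= b.
Proof.
intros HD Hc Hp Hg He.
assert (Hi : is_RInt g e T (minus (P T) (P e))).
{ apply (is_RInt_derive P g); intros x Hx; rewrite Rmin_left, Rmax_right in Hx by lra.
  apply HD; lra. apply Hc; lra. }
assert (Hu : RInt g e T = P T - P e) by (apply is_RInt_unique; exact Hi).
rewrite <- Hu. apply rint_gen_ge; auto.
exists (minus (P T) (P e)); exact Hi.
Qed.

Lemma w_bounds (w Fa Fb : R -> R) (tau ba bb a r : R) :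
  (forall x, 0 < x -> is_derive w x (- Fa x + tau * Fb x)) ->
  (forall x, 0 < x -> continuous Fa x) -> (forall x, 0 < x -> continuous Fb x) ->
  (forall x, 0 < x -> 0 <= Fa x) -> (forall x, 0 < x -> 0 <= Fb x) ->
  is_RInt_gen Fa (at_right 0) (Rbar_locally p_infty) ba ->
  is_RInt_gen Fb (at_right 0) (Rbar_locally p_infty) bb -> 0 <= tau ->
  filterlim w (Rbar_locally p_infty) (locally a) -> 0 < r ->
  a - tau * bb <= w r <= a + ba.
Proof.
intros HD Hca Hcb Hpa Hpb Ha Hb Ht Hl Hr.
assert (Key : forall T, r < T ->
  w r - ba <= w T <= w r + tau * bb).
{ intros T HT.
  assert (Hi : is_RInt (fun x => - Fa x + tau * Fb x) r T (minus (w T) (w r))).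
  { apply (is_RInt_derive w (fun x => - Fa x + tau * Fb x)); intros x Hx; rewrite Rmin_left, Rmax_right in Hx by lra.
    apply HD; lra.
    apply (continuous_plus (fun x => - Fa x) (fun x => tau * Fb x)).
    apply (continuous_opp Fa). apply Hca; lra.
    apply (continuous_scal_r tau Fb). apply Hcb; lra. }
  assert (Ea : ex_RInt (V:=R_CompleteNormedModule) Fa r T).
  { apply ex_RInt_continuous. intros z Hz. rewrite Rmin_left, Rmax_right in Hz by lra. apply Hca; lra. }
  assert (Eb : ex_RInt (V:=R_CompleteNormedModule) Fb r T).
  { apply ex_RInt_continuous. intros z Hz. rewrite Rmin_left, Rmax_right in Hz by lra. apply Hcb; lra. }
  assert (Hi2 : is_RInt (fun x => - Fa x + tau * Fb x) r T
     (- RInt Fa r T + tau * RInt Fb r T)).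
  { apply (is_RInt_plus (fun x => - Fa x) (fun x => tau * Fb x) r T (- RInt Fa r T) (tau * RInt Fb r T)).
    apply (is_RInt_opp Fa r T (RInt Fa r T)). apply (RInt_correct Fa); exact Ea.
    apply (is_RInt_scal Fb r T tau (RInt Fb r T)). apply (RInt_correct Fb); exact Eb. }
  assert (U1 : RInt (fun x => - Fa x + tau * Fb x) r T = w T - w r) by (apply is_RInt_unique; exact Hi).
  assert (U2 : RInt (fun x => - Fa x + tau * Fb x) r T = - RInt Fa r T + tau * RInt Fb r T) by (apply is_RInt_unique; exact Hi2).
  rewrite U1 in U2.
  assert (A1 : 0 <= RInt Fa r T) by (apply RInt_ge_0; auto; try lra; intros; apply Hpa; lra).
  assert (B1 : 0 <= RInt Fb r T) by (apply RInt_ge_0; auto; try lra; intros; apply Hpb; lra).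
  assert (A2 : RInt Fa r T <= ba) by (apply rint_gen_ge; auto; lra).
  assert (B2 : RInt Fb r T <= bb) by (apply rint_gen_ge; auto; lra).
  assert (tau * RInt Fb r T <= tau * bb) by (apply Rmult_le_compat_l; auto).
  assert (0 <= tau * RInt Fb r T) by (apply Rmult_le_pos; auto).
  lra. }
split.
- assert (a <= w r + tau * bb); [|lra].
  apply (lim_le_const (Rbar_locally p_infty) w); auto.
  exists r. intros T HT. apply Key; auto.
- assert (w r - ba <= a); [|lra].
  apply (lim_ge_const (Rbar_locally p_infty) w); auto.
  exists r. intros T HT. apply Key; auto.
Qed.

Lemma exp_le_mono x y : x <= y -> exp x <= exp y.
Proof. intro H. destruct H. left; apply exp_increasing; auto. subst; lra. Qed.

Lemma osc_bound (v d : R -> R) (K s r : R) :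
  (forall x, 0 < x -> is_derive v x (d x)) -> (forall x, 0 < x -> Rabs (x * d x) <= K) ->
  0 < s <= r -> Rabs (v r - v s) <= K * ((r - s) / s).
Proof.
intros HD HK Hs.
destruct (MVT_gen v s r d) as [c [Hc Heq]].
- intros x Hx. rewrite Rmin_left, Rmax_right in Hx by lra. apply HD; lra.
- intros x Hx. rewrite Rmin_left, Rmax_right in Hx by lra. apply continuity_pt_filterlim.
  apply (ex_derive_continuous (V:=R_NormedModule) v x). exists (d x). apply HD; lra.
- rewrite Rmin_left, Rmax_right in Hc by lra.
  rewrite Heq.
  assert (HKc := HK c ltac:(lra)).
  assert (0 <= K) by (eapply Rle_trans; [apply Rabs_pos| exact HKc]).
  replace (d c * (r - s)) with ((c * d c) * ((r - s) / c)) by (field; lra).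
  rewrite Rabs_mult. rewrite (Rabs_pos_eq ((r - s)/c)).
  2:{ apply Rdiv_le_0_compat; lra. }
  apply Rle_trans with (K * ((r - s) / c)).
  + apply Rmult_le_compat_r; auto. apply Rdiv_le_0_compat; lra.
  + apply Rmult_le_compat_l; auto.
    unfold Rdiv. apply Rmult_le_compat_l; [lra|]. apply Rinv_le_contravar; lra.
Qed.

Lemma sup_bound (v d F : R -> R) (k K b r : R) :
  0 < k -> 0 < K -> (forall x, 0 < x -> is_derive v x (d x)) ->
  (forall x, 0 < x -> Rabs (x * d x) <= K) ->
  (forall x, 0 < x -> F x = exp (k * ln x + v x)) ->
  (forall x, 0 < x -> continuous F x) ->
  is_RInt_gen F (at_right 0) (Rbar_locally p_infty) b -> b <= K -> 0 < r ->
  v r + (k + 1) * ln r <= K + ln K + (k + 1) * ln 2.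
Proof.
intros Hk HK HD Hd HF Hc Hb HbK Hr.
set (m := exp (k * ln (r/2) + v r - K)).
assert (Hlow : forall s, r/2 <= s <= r -> m <= F s).
{ intros s Hs. rewrite HF by lra. unfold m. apply exp_le_mono.
  assert (k * ln (r/2) <= k * ln s).
  { apply Rmult_le_compat_l; [lra|]. apply ln_le; lra. }
  assert (O := osc_bound v d K s r HD Hd ltac:(lra)).
  assert (O2 := Rle_abs (v r - v s)).
  assert (K * ((r - s) / s) <= K).
  { rewrite <- (Rmult_1_r K) at 2. apply Rmult_le_compat_l; [lra|].
    apply (Rmult_le_reg_r s); [lra|]. unfold Rdiv. rewrite Rmult_assoc, Rinv_l by lra. lra. }
  lra. }
assert (EF : ex_RInt (V:=R_CompleteNormedModule) F (r/2) r).
{ apply ex_RInt_continuous. intros z Hz. rewrite Rmin_left, Rmax_right in Hz by lra. apply Hc; lra. }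
assert (I1 : RInt (fun _ => m) (r/2) r <= RInt F (r/2) r).
{ apply RInt_le; auto; try lra. apply (ex_RInt_const (V:=R_CompleteNormedModule)).
  intros; apply Hlow; lra. }
rewrite RInt_const in I1. change (scal (r - r/2) m) with ((r - r/2) * m) in I1.
assert (I2 : RInt F (r/2) r <= b).
{ apply rint_gen_ge; auto; try lra. intros x Hx; rewrite HF by lra. left; apply exp_pos. }
assert (E : (r - r/2) * m = exp ((k + 1) * ln (r/2) + v r - K)).
{ unfold m. replace (r - r/2) with (exp (ln (r/2))) at 1 by (rewrite exp_ln; lra).
  rewrite <- exp_plus. f_equal. ring. }
assert (L : (k + 1) * ln (r/2) + v r - K <= ln K).
{ rewrite <- (ln_exp ((k + 1) * ln (r/2) + v r - K)). apply ln_le. apply exp_pos. lra. }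
rewrite ln_div in L by lra. lra.
Qed.

Lemma lim_plus {T} (F : (T->Prop)->Prop) {FF : Filter F} (f g : T -> R) a b :
  filterlim f F (locally a) -> filterlim g F (locally b) ->
  filterlim (fun x => f x + g x) F (locally (a + b)).
Proof.
intros Hf Hg. apply (filterlim_comp_2 f g Rplus Hf Hg).
apply (filterlim_plus (K:=R_AbsRing) (V:=R_NormedModule) a b).
Qed.

Lemma lim_mult {T} (F : (T->Prop)->Prop) {FF : Filter F} (f g : T -> R) a b :
  filterlim f F (locally a) -> filterlim g F (locally b) ->
  filterlim (fun x => f x * g x) F (locally (a * b)).
Proof.
intros Hf Hg. apply (filterlim_comp_2 f g Rmult Hf Hg).
apply (filterlim_mult (K:=R_AbsRing) a b).
Qed.

Lemma lim_eq {T} (F : (T->Prop)->Prop) (f : T -> R) a b :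
  filterlim f F (locally a) -> a = b -> filterlim f F (locally b).
Proof. intros H E; subst; auto. Qed.

Lemma lim_cst {T} (F : (T->Prop)->Prop) {FF : Filter F} (c : R) :
  filterlim (fun _ : T => c) F (locally c).
Proof. apply filterlim_const. Qed.

Lemma at_right0_lim (f : R -> R) L :
  (forall eps, 0 < eps -> exists d, 0 < d /\ forall x, 0 < x < d -> Rabs (f x - L) < eps) ->
  filterlim f (at_right 0) (locally L).
Proof.
intros H. apply filterlim_locally. intros eps.
destruct (H eps (cond_pos eps)) as [d [Hd H']].
exists (mkposreal d Hd). intros y Hy Hy0. apply ball_Rb in Hy. simpl in Hy.
change (Rabs (f y - L) < eps). apply H'. lra.
Qed.

Lemma rc0 (v : R -> R) : filterlim v (at_right 0) (locally (v 0)) ->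
  forall eps, 0 < eps -> exists d, 0 < d /\ forall x, 0 < x < d -> Rabs (v x - v 0) < eps.
Proof.
intros Hc eps He.
destruct (proj1 (filterlim_locally v (v 0)) Hc (mkposreal eps He)) as [d Hd].
exists d. split; [apply cond_pos|]. intros x Hx.
assert (B : ball 0 d x).
{ change (Rabs (x - 0) < d). rewrite Rminus_0_r, Rabs_pos_eq; lra. }
specialize (Hd x B ltac:(lra)). exact Hd.
Qed.

Lemma E_bound0 (v : R -> R) k : 0 <= k -> filterlim v (at_right 0) (locally (v 0)) ->
  exists d, 0 < d /\ forall x, 0 < x < d -> exp (k * ln x + v x) <= x ^ 0 * exp (v 0 + 1).
Proof.
intros Hk Hc. destruct (rc0 v Hc 1 ltac:(lra)) as [d [Hd H]].
exists (Rmin d 1). split. apply Rmin_pos; lra.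
intros x Hx. simpl. rewrite Rmult_1_l. apply exp_le_mono.
assert (x < d) by (eapply Rlt_le_trans; [apply Hx| apply Rmin_l]).
assert (x < 1) by (eapply Rlt_le_trans; [apply Hx| apply Rmin_r]).
specialize (H x ltac:(lra)). apply Rabs_def2 in H.
assert (ln x < 0) by (rewrite <- ln_1; apply ln_increasing; lra).
assert (k * ln x <= 0) by (apply Rmult_le_0_l; lra).
lra.
Qed.

Lemma E_lim0 (v : R -> R) k : 1 <= k -> filterlim v (at_right 0) (locally (v 0)) ->
  filterlim (fun x => exp (k * ln x + v x)) (at_right 0) (locally 0).
Proof.
intros Hk Hc. apply at_right0_lim. intros eps He.
destruct (rc0 v Hc 1 ltac:(lra)) as [d [Hd H]].
set (A := exp (v 0 + 1)).
assert (HA : 0 < A) by apply exp_pos.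
exists (Rmin (Rmin d 1) (eps / A)). split.
{ apply Rmin_pos; [apply Rmin_pos|]; try lra. apply Rdiv_lt_0_compat; lra. }
intros x Hx.
assert (x < d) by (eapply Rlt_le_trans; [apply Hx| eapply Rle_trans; [apply Rmin_l|apply Rmin_l]]).
assert (x < 1) by (eapply Rlt_le_trans; [apply Hx| eapply Rle_trans; [apply Rmin_l|apply Rmin_r]]).
assert (x < eps / A) by (eapply Rlt_le_trans; [apply Hx| apply Rmin_r]).
rewrite Rminus_0_r, Rabs_pos_eq by (left; apply exp_pos).
specialize (H x ltac:(lra)). apply Rabs_def2 in H.
assert (ln x < 0) by (rewrite <- ln_1; apply ln_increasing; lra).
assert (k * ln x <= ln x) by nra.
apply Rle_lt_trans with (exp (ln x + (v 0 + 1))).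
- apply exp_le_mono. lra.
- rewrite exp_plus, exp_ln by lra. fold A.
  apply (Rmult_lt_reg_r (/ A)). apply Rinv_0_lt_compat; lra.
  rewrite Rmult_assoc, Rinv_r by lra. rewrite Rmult_1_r. exact H2.
Qed.

Lemma w_lim0 (v d dw : R -> R) (M d0 : R) : 0 < d0 -> 0 <= M ->
  (forall x, 0 < x -> is_derive v x (d x)) ->
  (forall x, 0 < x -> is_derive (fun y => y * d y) x (dw x)) ->
  (forall x, 0 < x < d0 -> Rabs (dw x) <= M) ->
  filterlim v (at_right 0) (locally (v 0)) ->
  filterlim (fun x => x * d x) (at_right 0) (locally 0).
Proof.
intros Hd0 HM HD HW HB Hc. apply at_right0_lim. intros eps He.
destruct (rc0 v Hc (eps/8) ltac:(lra)) as [d1 [Hd1 H1]].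
exists (Rmin (Rmin d1 d0) (eps / (2 * (M + 1)))). split.
{ apply Rmin_pos; [apply Rmin_pos|]; try lra. apply Rdiv_lt_0_compat; lra. }
intros r Hr.
assert (r < d1) by (eapply Rlt_le_trans; [apply Hr| eapply Rle_trans; [apply Rmin_l|apply Rmin_l]]).
assert (r < d0) by (eapply Rlt_le_trans; [apply Hr| eapply Rle_trans; [apply Rmin_l|apply Rmin_r]]).
assert (Hre : r < eps / (2 * (M + 1))) by (eapply Rlt_le_trans; [apply Hr| apply Rmin_r]).
assert (Hre2 : r * (M + 1) < eps / 2).
{ apply (Rmult_lt_compat_r (M + 1)) in Hre; [|lra].
  replace (eps / (2 * (M + 1)) * (M + 1)) with (eps / 2) in Hre by (field; lra). exact Hre. }
destruct (MVT_gen v (r/2) r d) as [c [Hc1 Hc2]].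
- intros x Hx. rewrite Rmin_left, Rmax_right in Hx by lra. apply HD; lra.
- intros x Hx. rewrite Rmin_left, Rmax_right in Hx by lra. apply continuity_pt_filterlim.
  apply (ex_derive_continuous (V:=R_NormedModule) v x). exists (d x). apply HD; lra.
- rewrite Rmin_left, Rmax_right in Hc1 by lra.
  assert (A1 := H1 r ltac:(lra)). assert (A2 := H1 (r/2) ltac:(lra)).
  assert (Hv : Rabs (v r - v (r/2)) < eps / 4).
  { apply Rabs_def2 in A1. apply Rabs_def2 in A2. apply Rabs_def1; lra. }
  rewrite Hc2 in Hv. replace (r - r/2) with (r/2) in Hv by field.
  assert (Hcd : Rabs (c * d c) < eps / 2).
  { rewrite Rabs_mult in Hv |- *. rewrite (Rabs_pos_eq c) by lra.
    rewrite (Rabs_pos_eq (r/2)) in Hv by lra.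
    assert (0 <= Rabs (d c)) by apply Rabs_pos.
    apply Rle_lt_trans with (r * Rabs (d c)).
    apply Rmult_le_compat_r; lra. lra. }
  destruct (MVT_gen (fun y => y * d y) c r dw) as [c' [Hc'1 Hc'2]].
  + intros x Hx. rewrite Rmin_left, Rmax_right in Hx by lra. apply HW; lra.
  + intros x Hx. rewrite Rmin_left, Rmax_right in Hx by lra. apply continuity_pt_filterlim.
    apply (ex_derive_continuous (V:=R_NormedModule) (fun y => y * d y) x). exists (dw x). apply HW; lra.
  + rewrite Rmin_left, Rmax_right in Hc'1 by lra.
    assert (Hb := HB c' ltac:(lra)).
    assert (Hw : Rabs (r * d r - c * d c) <= M * r).
    { rewrite Hc'2, Rabs_mult, (Rabs_pos_eq (r - c)) by lra.
      apply Rle_trans with (M * (r - c)).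
      apply Rmult_le_compat_r; lra. apply Rmult_le_compat_l; lra. }
    rewrite Rminus_0_r.
    replace (r * d r) with ((r * d r - c * d c) + c * d c) by ring.
    eapply Rle_lt_trans. apply Rabs_triang.
    assert (M * r <= r * (M + 1)) by nra. lra.
Qed.

Lemma dG (k : R) (v d : R -> R) r : 0<r -> is_derive v r (d r) ->
  is_derive (fun x => exp (k * ln x + v x)) r (exp (k*ln r + v r) * (k / r + d r)).
Proof.
intros Hr Hv.
auto_derive.
- split; [exact Hr| split; [exists (d r); exact Hv | exact I]].
- replace (Derive (fun x => v x) r) with (d r) by (symmetry; apply is_derive_unique; exact Hv). field. lra.
Qed.

Lemma cG (k : R) (v d : R -> R) r : 0<r -> is_derive v r (d r) ->
  continuous (fun x => exp (k * ln x + v x)) r.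
Proof.
intros Hr Hv. apply (ex_derive_continuous (V:=R_NormedModule) (fun x => exp (k * ln x + v x)) r).
eexists. apply dG; eauto.
Qed.

Lemma core (N tau : R) (v1 v2 d1 dd1 d2 dd2 : R -> R) (b1 b2 : R) :
  0 < N -> 0 < tau < 1 ->
  filterlim v1 (at_right 0) (locally (v1 0)) ->
  filterlim v2 (at_right 0) (locally (v2 0)) ->
  (forall r, 0 < r -> is_derive v1 r (d1 r) /\ is_derive d1 r (dd1 r) /\ continuous dd1 r) ->
  (forall r, 0 < r -> is_derive v2 r (d2 r) /\ is_derive d2 r (dd2 r) /\ continuous dd2 r) ->
  (forall r, 0 < r -> - (d1 r + r * dd1 r) =
      exp ((2*N+1) * ln r + v1 r) - tau * exp (1 * ln r + v2 r)) ->
  (forall r, 0 < r -> - (d2 r + r * dd2 r) =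
      exp (1 * ln r + v2 r) - tau * exp ((2*N+1) * ln r + v1 r)) ->
  is_RInt_gen (fun r => exp ((2*N+1) * ln r + v1 r)) (at_right 0) (Rbar_locally p_infty) b1 ->
  is_RInt_gen (fun r => exp (1 * ln r + v2 r)) (at_right 0) (Rbar_locally p_infty) b2 ->
  filterlim (fun r => r * d1 r) (Rbar_locally p_infty) (locally (- (b1 - tau * b2))) ->
  filterlim (fun r => r * d2 r) (Rbar_locally p_infty) (locally (- (b2 - tau * b1))) ->
  b1 ^ 2 - 2 * tau * b1 * b2 + b2 ^ 2 <= 4 * (N + 1) * b1 + 4 * b2.
Proof.
intros HN Ht Hc1 Hc2 HD1 HD2 HE1 HE2 HI1 HI2 HL1 HL2.
set (F1 := fun r => exp ((2*N+1) * ln r + v1 r)).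
set (F2 := fun r => exp (1 * ln r + v2 r)).
set (P := fun x => exp ((2*N+2) * ln x + v1 x) + exp (2 * ln x + v2 x) +
   ((x * d1 x)^2 + (x * d2 x)^2 + 2 * tau * (x * d1 x) * (x * d2 x)) / (2 * (1 - tau^2))).
assert (dP : forall x, 0 < x -> is_derive P x ((2*N+2) * F1 x + 2 * F2 x)).
{ intros x Hx. destruct (HD1 x Hx) as [A1 [B1 _]]. destruct (HD2 x Hx) as [A2 [B2 _]].
  unfold P. auto_derive.
  - repeat split; try assumption; eexists; eassumption.
  - replace (Derive (fun y => v1 y) x) with (d1 x) by (symmetry; apply is_derive_unique; auto).
    replace (Derive (fun y => v2 y) x) with (d2 x) by (symmetry; apply is_derive_unique; auto).
    replace (Derive (fun y => d1 y) x) with (dd1 x) by (symmetry; apply is_derive_unique; auto).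
    replace (Derive (fun y => d2 y) x) with (dd2 x) by (symmetry; apply is_derive_unique; auto).
    assert (X1 : exp ((2*N+2)*ln x + v1 x) = x * F1 x).
    { unfold F1; replace ((2*N+2)*ln x + v1 x) with (ln x + ((2*N+1)*ln x + v1 x)) by ring.
      rewrite exp_plus, exp_ln; auto. }
    assert (X2 : exp (2*ln x + v2 x) = x * F2 x).
    { unfold F2; replace (2*ln x + v2 x) with (ln x + (1*ln x + v2 x)) by ring.
      rewrite exp_plus, exp_ln; auto. }
    rewrite X1, X2.
    assert (Y1 : dd1 x = (-(F1 x - tau*F2 x) - d1 x)/x).
    { unfold F1, F2; rewrite <- HE1 by auto; field; lra. }
    assert (Y2 : dd2 x = (-(F2 x - tau*F1 x) - d2 x)/x).
    { unfold F1, F2; rewrite <- HE2 by auto; field; lra. }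
    rewrite Y1, Y2. field. repeat split; try lra; nra. }
assert (cF1 : forall x, 0 < x -> continuous F1 x).
{ intros x Hx. apply (cG _ v1 d1); auto. apply HD1; auto. }
assert (cF2 : forall x, 0 < x -> continuous F2 x).
{ intros x Hx. apply (cG _ v2 d2); auto. apply HD2; auto. }
assert (pF1 : forall x, 0 < x -> 0 <= F1 x) by (intros; left; apply exp_pos).
assert (pF2 : forall x, 0 < x -> 0 <= F2 x) by (intros; left; apply exp_pos).
assert (dw1 : forall x, 0 < x -> is_derive (fun y => y * d1 y) x (- F1 x + tau * F2 x)).
{ intros x Hx. destruct (HD1 x Hx) as [A1 [B1 _]]. auto_derive.
  - eexists; eassumption.
  - replace (Derive (fun y => d1 y) x) with (dd1 x) by (symmetry; apply is_derive_unique; auto).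
    assert (E := HE1 x Hx). change (- (d1 x + x * dd1 x) = F1 x - tau * F2 x) in E. lra. }
assert (dw2 : forall x, 0 < x -> is_derive (fun y => y * d2 y) x (- F2 x + tau * F1 x)).
{ intros x Hx. destruct (HD2 x Hx) as [A1 [B1 _]]. auto_derive.
  - eexists; eassumption.
  - replace (Derive (fun y => d2 y) x) with (dd2 x) by (symmetry; apply is_derive_unique; auto).
    assert (E := HE2 x Hx). change (- (d2 x + x * dd2 x) = F2 x - tau * F1 x) in E. lra. }
set (G := (2*N+2) * b1 + 2 * b2).
assert (Ig : is_RInt_gen (fun x => (2*N+2) * F1 x + 2 * F2 x) (at_right 0) (Rbar_locally p_infty) G).
{ apply (is_RInt_gen_plus (fun y => (2*N+2) * F1 y) (fun y => 2 * F2 y)).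
  apply (is_RInt_gen_scal F1 (2*N+2)). exact HI1.
  apply (is_RInt_gen_scal F2 2). exact HI2. }
assert (PT : forall e T, 0 < e <= T -> P T - P e <= G).
{ intros e T He. apply (ftc_le P (fun x => (2*N+2) * F1 x + 2 * F2 x)); auto.
  - intros x Hx. apply (continuous_plus (fun x => (2*N+2) * F1 x) (fun x => 2 * F2 x)).
    apply (continuous_scal_r (2*N+2) F1). auto.
    apply (continuous_scal_r 2 F2). auto.
  - intros x Hx. specialize (pF1 x Hx). specialize (pF2 x Hx). nra. }
destruct (E_bound0 v1 (2*N+1) ltac:(lra) Hc1) as [da [Hda Ba]].
destruct (E_bound0 v2 1 ltac:(lra) Hc2) as [db [Hdb Bb]].
simpl in Ba, Bb.
set (M := exp (v1 0 + 1) + exp (v2 0 + 1)).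
assert (HM : 0 <= M) by (unfold M; generalize (exp_pos (v1 0 + 1)) (exp_pos (v2 0 + 1)); lra).
assert (Bd : forall x, 0 < x < Rmin da db -> F1 x <= exp (v1 0 + 1) /\ F2 x <= exp (v2 0 + 1)).
{ intros x Hx. assert (x < da) by (eapply Rlt_le_trans; [apply Hx|apply Rmin_l]).
  assert (x < db) by (eapply Rlt_le_trans; [apply Hx|apply Rmin_r]).
  specialize (Ba x ltac:(lra)). specialize (Bb x ltac:(lra)). split; unfold F1, F2; lra. }
assert (W1 : filterlim (fun x => x * d1 x) (at_right 0) (locally 0)).
{ apply (w_lim0 v1 d1 (fun x => - F1 x + tau * F2 x) M (Rmin da db)); auto.
  - apply Rmin_pos; auto.
  - intros x Hx; apply HD1; auto.
  - intros x Hx. destruct (Bd x Hx) as [Q1 Q2]. assert (0 < x) by lra.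
    specialize (pF1 x ltac:(lra)). specialize (pF2 x ltac:(lra)).
    apply Rabs_le. unfold M. split; nra. }
assert (W2 : filterlim (fun x => x * d2 x) (at_right 0) (locally 0)).
{ apply (w_lim0 v2 d2 (fun x => - F2 x + tau * F1 x) M (Rmin da db)); auto.
  - apply Rmin_pos; auto.
  - intros x Hx; apply HD2; auto.
  - intros x Hx. destruct (Bd x Hx) as [Q1 Q2]. assert (0 < x) by lra.
    specialize (pF1 x ltac:(lra)). specialize (pF2 x ltac:(lra)).
    apply Rabs_le. unfold M. split; nra. }
set (c := / (2 * (1 - tau ^ 2))).
assert (P0 : filterlim P (at_right 0) (locally 0)).
{ apply (filterlim_ext (fun x => exp ((2*N+2) * ln x + v1 x) + exp (2 * ln x + v2 x) +
     ((x * d1 x) * (x * d1 x) + (x * d2 x) * (x * d2 x) + (2 * tau) * (x * d1 x) * (x * d2 x)) * c)).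
  { intros x. unfold P, c. unfold Rdiv. ring. }
  apply (lim_eq (at_right 0) _ (0 + 0 + (0 * 0 + 0 * 0 + (2 * tau) * 0 * 0) * c) 0); [|change ((0 + 0 + (0 * 0 + 0 * 0 + (2 * tau) * 0 * 0) * c : R) = 0); ring].
  apply (lim_plus (at_right 0)). apply (lim_plus (at_right 0)).
  apply E_lim0; auto; lra. apply E_lim0; auto; lra.
  apply (lim_mult (at_right 0)); [|apply (lim_cst (at_right 0))].
  apply (lim_plus (at_right 0)). apply (lim_plus (at_right 0)). apply (lim_mult (at_right 0)); auto. apply (lim_mult (at_right 0)); auto.
  apply (lim_mult (at_right 0)); auto. apply (lim_mult (at_right 0)); auto. apply (lim_cst (at_right 0)). }
assert (Hc : 0 < c).
{ unfold c. apply Rinv_0_lt_compat. nra. }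
assert (QT : forall T, 0 < T ->
   ((T * d1 T) * (T * d1 T) + (T * d2 T) * (T * d2 T) + (2 * tau) * (T * d1 T) * (T * d2 T)) * c <= G).
{ intros T HT.
  assert (P T - G <= 0).
  { apply (lim_ge_const (at_right 0) P); auto.
    exists (mkposreal T HT). intros y Hy Hy0. apply ball_Rb in Hy. simpl in Hy.
    assert (H0 := PT y T ltac:(lra)). lra. }
  assert (0 < exp ((2*N+2) * ln T + v1 T)) by apply exp_pos.
  assert (0 < exp (2 * ln T + v2 T)) by apply exp_pos.
  unfold P in H. unfold c in *. unfold Rdiv in H.
  replace (((T * d1 T) * (T * d1 T) + (T * d2 T) * (T * d2 T) + (2 * tau) * (T * d1 T) * (T * d2 T)))
    with ((T * d1 T) ^ 2 + (T * d2 T) ^ 2 + 2 * tau * (T * d1 T) * (T * d2 T)) by ring.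
  lra. }
set (a := - (b1 - tau * b2)). set (b := - (b2 - tau * b1)).
assert (Lq : (a * a + b * b + (2 * tau) * a * b) * c <= G).
{ apply (lim_le_const (Rbar_locally p_infty)
    (fun T => ((T * d1 T) * (T * d1 T) + (T * d2 T) * (T * d2 T) + (2 * tau) * (T * d1 T) * (T * d2 T)) * c)).
  - apply (lim_mult (Rbar_locally p_infty)); [|apply (lim_cst (Rbar_locally p_infty))].
    apply (lim_plus (Rbar_locally p_infty)). apply (lim_plus (Rbar_locally p_infty)). apply (lim_mult (Rbar_locally p_infty)); auto. apply (lim_mult (Rbar_locally p_infty)); auto.
    apply (lim_mult (Rbar_locally p_infty)); auto. apply (lim_mult (Rbar_locally p_infty)); auto. apply (lim_cst (Rbar_locally p_infty)).
  - exists 0. intros; apply QT; auto. }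
assert (Id : (a * a + b * b + (2 * tau) * a * b) * c =
  (b1 ^ 2 - 2 * tau * b1 * b2 + b2 ^ 2) / 2).
{ unfold a, b, c. field. nra. }
rewrite Id in Lq. unfold G in Lq. lra.
Qed.

Lemma beta_bound (N tau b1 b2 : R) : 0 < N -> 0 < tau < 1 -> 0 <= b1 -> 0 <= b2 ->
  b1 ^ 2 - 2 * tau * b1 * b2 + b2 ^ 2 <= 4 * (N + 1) * b1 + 4 * b2 ->
  b1 + b2 <= 8 * (N + 1) / (1 - tau).
Proof.
intros HN Ht H1 H2 H.
set (S := b1 + b2).
assert (A : (1 - tau) * (S * S) / 2 <= 4 * (N + 1) * S).
{ unfold S.
  assert (X1 : 0 <= tau * ((b1 - b2) * (b1 - b2))) by (apply Rmult_le_pos; [lra| apply Rle_0_sqr]).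
  assert (X2 : 0 <= (1 - tau) * ((b1 - b2) * (b1 - b2))) by (apply Rmult_le_pos; [lra| apply Rle_0_sqr]).
  assert (X3 : (1 - tau) * ((b1 + b2) * (b1 + b2)) / 2 <= b1 ^ 2 - 2 * tau * b1 * b2 + b2 ^ 2).
  { replace (b1 ^ 2 - 2 * tau * b1 * b2 + b2 ^ 2) with
      ((1 - tau) * ((b1 + b2) * (b1 + b2)) / 2 + (1 - tau) * ((b1 - b2) * (b1 - b2)) / 2
        + tau * ((b1 - b2) * (b1 - b2))) by field. lra. }
  assert (0 <= N * b2) by (apply Rmult_le_pos; lra).
  lra. }
destruct (Req_dec S 0) as [E|E].
- rewrite E. apply Rdiv_le_0_compat; lra.
- assert (0 < S) by (unfold S in *; lra).
  apply (Rmult_le_reg_l ((1 - tau) * S / 2)).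
  + apply Rdiv_lt_0_compat; [nra|lra].
  + replace ((1 - tau) * S / 2 * (8 * (N + 1) / (1 - tau))) with (4 * (N + 1) * S) by (field; lra).
    lra.
Qed.

Lemma conv1 (k r v : R) : 0 < r -> Rpower r k * exp v = exp (k * ln r + v).
Proof. intros. unfold Rpower. rewrite exp_plus. reflexivity. Qed.

Lemma conv2 (r v : R) : 0 < r -> r * exp v = exp (1 * ln r + v).
Proof. intros. rewrite exp_plus, Rmult_1_l, exp_ln; auto. Qed.

Lemma gen_conv (f g : R -> R) (b : R) : (forall x, 0 < x -> f x = g x) ->
  is_RInt_gen f (at_right 0) (Rbar_locally p_infty) b ->
  is_RInt_gen g (at_right 0) (Rbar_locally p_infty) b.
Proof.
intros E H. apply (is_RInt_gen_ext f g); auto.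
apply Filter_prod with (fun x => 0 < x) (fun y => 0 < y).
- exists (mkposreal 1 Rlt_0_1). intros; auto.
- exists 0. auto.
- intros x y Hx Hy z Hz. simpl in Hz. apply E.
  destruct Hz as [Hz _]. unfold Rmin in Hz. destruct (Rle_dec x y); lra.
Qed.

Lemma solution_bounds (N tau : R) (v1 v2 : R -> R) :
  0 < N -> 0 < tau < 1 -> radial_solution N tau v1 v2 ->
  exists d1 d2 : R -> R,
    (forall x, 0 < x -> is_derive v1 x (d1 x)) /\
    (forall x, 0 < x -> Rabs (x * d1 x) <= 8 * (N + 1) / (1 - tau)) /\
    (forall x, 0 < x -> is_derive v2 x (d2 x)) /\
    (forall x, 0 < x -> Rabs (x * d2 x) <= 8 * (N + 1) / (1 - tau)) /\
    (forall r, 0 < r -> v1 r + (2 * N + 1 + 1) * ln r <=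
        8 * (N + 1) / (1 - tau) + ln (8 * (N + 1) / (1 - tau)) + (2 * N + 1 + 1) * ln 2) /\
    (forall r, 0 < r -> v2 r + (1 + 1) * ln r <=
        8 * (N + 1) / (1 - tau) + ln (8 * (N + 1) / (1 - tau)) + (1 + 1) * ln 2).
Proof.
intros HN Ht [[Hc1 _] [[Hc2 _] [d1 [dd1 [d2 [dd2 [b1 [b2
  [HD1 [HD2 [HE1 [HE2 [_ [_ [HI1 [HI2 [HL1 HL2]]]]]]]]]]]]]]]]].
set (K := 8 * (N + 1) / (1 - tau)).
assert (HK : 0 < K) by (unfold K; apply Rdiv_lt_0_compat; lra).
set (F1 := fun r => exp ((2*N+1) * ln r + v1 r)).
set (F2 := fun r => exp (1 * ln r + v2 r)).
assert (HE1' : forall r, 0 < r -> - (d1 r + r * dd1 r) = F1 r - tau * F2 r).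
{ intros r Hr. rewrite HE1 by auto. unfold F1, F2. rewrite conv1 by auto.
  rewrite Rmult_assoc, conv2 by auto. reflexivity. }
assert (HE2' : forall r, 0 < r -> - (d2 r + r * dd2 r) = F2 r - tau * F1 r).
{ intros r Hr. rewrite HE2 by auto. unfold F1, F2. rewrite (Rmult_assoc tau), conv1 by auto.
  rewrite conv2 by auto. reflexivity. }
assert (HI1' : is_RInt_gen F1 (at_right 0) (Rbar_locally p_infty) b1).
{ apply (gen_conv _ _ b1 (fun x Hx => conv1 (2*N+1) x (v1 x) Hx)); auto. }
assert (HI2' : is_RInt_gen F2 (at_right 0) (Rbar_locally p_infty) b2).
{ apply (gen_conv _ _ b2 (fun x Hx => conv2 x (v2 x) Hx)); auto. }
assert (Cr := core N tau v1 v2 d1 dd1 d2 dd2 b1 b2 HN Ht Hc1 Hc2 HD1 HD2 HE1' HE2' HI1' HI2' HL1 HL2).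
assert (cF1 : forall x, 0 < x -> continuous F1 x).
{ intros x Hx. apply (cG _ v1 d1); auto. apply HD1; auto. }
assert (cF2 : forall x, 0 < x -> continuous F2 x).
{ intros x Hx. apply (cG _ v2 d2); auto. apply HD2; auto. }
assert (pF1 : forall x, 0 < x -> 0 <= F1 x) by (intros; left; apply exp_pos).
assert (pF2 : forall x, 0 < x -> 0 <= F2 x) by (intros; left; apply exp_pos).
assert (nb1 : 0 <= b1) by (apply (rint_gen_nonneg F1); auto).
assert (nb2 : 0 <= b2) by (apply (rint_gen_nonneg F2); auto).
assert (BB := beta_bound N tau b1 b2 HN Ht nb1 nb2 Cr). fold K in BB.
assert (dw1 : forall x, 0 < x -> is_derive (fun y => y * d1 y) x (- F1 x + tau * F2 x)).
{ intros x Hx. destruct (HD1 x Hx) as [A1 [B1 _]]. auto_derive.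
  - eexists; eassumption.
  - replace (Derive (fun y => d1 y) x) with (dd1 x) by (symmetry; apply is_derive_unique; auto).
    assert (E := HE1' x Hx). lra. }
assert (dw2 : forall x, 0 < x -> is_derive (fun y => y * d2 y) x (- F2 x + tau * F1 x)).
{ intros x Hx. destruct (HD2 x Hx) as [A1 [B1 _]]. auto_derive.
  - eexists; eassumption.
  - replace (Derive (fun y => d2 y) x) with (dd2 x) by (symmetry; apply is_derive_unique; auto).
    assert (E := HE2' x Hx). lra. }
assert (Wb1 : forall x, 0 < x -> Rabs (x * d1 x) <= K).
{ intros x Hx.
  assert (W := w_bounds (fun y => y * d1 y) F1 F2 tau b1 b2 (- (b1 - tau * b2)) x
     dw1 cF1 cF2 pF1 pF2 HI1' HI2' ltac:(lra) HL1 Hx).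
  simpl in W. apply Rabs_le. nra. }
assert (Wb2 : forall x, 0 < x -> Rabs (x * d2 x) <= K).
{ intros x Hx.
  assert (W := w_bounds (fun y => y * d2 y) F2 F1 tau b2 b1 (- (b2 - tau * b1)) x
     dw2 cF2 cF1 pF2 pF1 HI2' HI1' ltac:(lra) HL2 Hx).
  simpl in W. apply Rabs_le. nra. }
assert (Dv1 : forall x, 0 < x -> is_derive v1 x (d1 x)) by (intros; apply HD1; auto).
assert (Dv2 : forall x, 0 < x -> is_derive v2 x (d2 x)) by (intros; apply HD2; auto).
exists d1, d2. split; [auto|]. split; [auto|]. split; [auto|]. split; [auto|]. split.
- intros r Hr. apply (sup_bound v1 d1 F1 (2*N+1) K b1 r); auto; lra.
- intros r Hr. apply (sup_bound v2 d2 F2 1 K b2 r); auto; lra.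
Qed.

Lemma final_comp (v d : R -> R) (K C q r0 rho C0 : R) :
  (forall x, 0 < x -> is_derive v x (d x)) -> (forall x, 0 < x -> Rabs (x * d x) <= K) ->
  (forall r, 0 < r -> v r + q * ln r <= C) -> 0 <= q -> 0 < r0 -> 1 < rho ->
  Rabs C / 2 + K * (rho - 1) <= C0 ->
  maxOn v r0 (rho * r0) <= 1/2 * minOn v r0 (rho * r0) + q * (1/2 - 1) * ln r0 + C0.
Proof.
intros HD HK HC Hq Hr0 Hrho HC0.
set (D := K * (rho - 1)).
assert (Osc : forall x y, r0 <= x <= rho * r0 -> r0 <= y <= rho * r0 -> v x <= v y + D).
{ intros x y Hx Hy. unfold D.
  assert (0 <= K) by (eapply Rle_trans; [apply Rabs_pos|apply (HK r0 Hr0)]).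
  destruct (Rle_dec x y) as [h|h].
  - assert (O := osc_bound v d K x y HD HK ltac:(lra)).
    assert (O2 := Rle_abs (v y - v x)).
    assert (Rabs (v x - v y) = Rabs (v y - v x)) by (rewrite Rabs_minus_sym; auto).
    assert ((y - x) / x <= rho - 1).
    { apply (Rmult_le_reg_r x); [lra|]. unfold Rdiv. rewrite Rmult_assoc, Rinv_l by lra. nra. }
    assert (K * ((y - x) / x) <= K * (rho - 1)) by (apply Rmult_le_compat_l; auto).
    assert (O3 := Rle_abs (v x - v y)). lra.
  - assert (O := osc_bound v d K y x HD HK ltac:(lra)).
    assert (O2 := Rle_abs (v x - v y)).
    assert ((x - y) / y <= rho - 1).
    { apply (Rmult_le_reg_r y); [lra|]. unfold Rdiv. rewrite Rmult_assoc, Rinv_l by lra. nra. }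
    assert (K * ((x - y) / y) <= K * (rho - 1)) by (apply Rmult_le_compat_l; auto).
    lra. }
assert (Hr0in : r0 <= r0 <= rho * r0) by nra.
unfold maxOn, minOn.
set (S := fun y => exists x, r0 <= x <= rho * r0 /\ y = v x).
destruct (Glb_Rbar_correct S) as [Hlb Hglb].
destruct (Lub_Rbar_correct S) as [Hub Hlub].
assert (G1 : Rbar_le (Glb_Rbar S) (v r0)) by (apply Hlb; exists r0; auto).
assert (G2 : forall x, r0 <= x <= rho * r0 -> Rbar_le (v x - D) (Glb_Rbar S)).
{ intros x Hx. apply Hglb. intros y [z [Hz ->]]. simpl. assert (Hxz := Osc x z Hx Hz). lra. }
destruct (Glb_Rbar S) as [m| |] eqn:Eg; simpl in G1; try contradiction.
2:{ specialize (G2 r0 Hr0in). simpl in G2. contradiction. }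
simpl.
assert (L1 : Rbar_le (Lub_Rbar S) (m + D)).
{ apply Hlub. intros y [z [Hz ->]]. simpl. specialize (G2 z Hz). simpl in G2. lra. }
assert (L2 : Rbar_le (v r0) (Lub_Rbar S)) by (apply Hub; exists r0; auto).
destruct (Lub_Rbar S) as [l| |]; simpl in L1, L2; try contradiction.
assert (HCr := HC r0 Hr0).
assert (C <= Rabs C) by apply Rle_abs.
fold D in HC0.
assert (m + q * ln r0 <= C) by lra.
replace (q * (1 / 2 - 1) * ln r0) with (- (q * ln r0) / 2) by field. simpl. lra.
Qed.

Theorem mainTheorem11 :
  forall rho : R, 1 < rho ->
  exists gamma : R, 0 < gamma < 1 /\
  forall N tau : R, 0 < N -> 0 < tau < 1 ->
  exists C0 : R, 0 < C0 /\
  forall v1 v2 : R -> R, radial_solution N tau v1 v2 ->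
  forall r0 R0 : R, 0 < r0 -> R0 = rho * r0 ->
    maxOn v1 r0 R0 <= gamma * minOn v1 r0 R0 + 2 * (N + 1) * (gamma - 1) * ln r0 + C0 /\
    maxOn v2 r0 R0 <= gamma * minOn v2 r0 R0 + 2 * (gamma - 1) * ln r0 + C0.
Proof.
intros rho Hrho. exists (1/2). split; [lra|].
intros N tau HN Ht.
set (K := 8 * (N + 1) / (1 - tau)).
set (C1 := K + ln K + (2 * N + 1 + 1) * ln 2).
set (C2 := K + ln K + (1 + 1) * ln 2).
assert (HK : 0 < K) by (unfold K; apply Rdiv_lt_0_compat; lra).
exists ((Rabs C1 + Rabs C2) / 2 + K * (rho - 1) + 1). split.
{ assert (0 <= Rabs C1) by apply Rabs_pos. assert (0 <= Rabs C2) by apply Rabs_pos.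
  assert (0 <= K * (rho - 1)) by (apply Rmult_le_pos; lra). lra. }
intros v1 v2 Hs r0 R0 Hr0 HR0. subst R0.
destruct (solution_bounds N tau v1 v2 HN Ht Hs) as [d1 [d2 [D1 [B1 [D2 [B2 [S1 S2]]]]]]].
fold K in B1, B2, S1, S2. fold C1 in S1. fold C2 in S2.
assert (0 <= Rabs C1) by apply Rabs_pos. assert (0 <= Rabs C2) by apply Rabs_pos.
split.
- replace (2 * (N + 1) * (1/2 - 1) * ln r0) with ((2 * N + 1 + 1) * (1/2 - 1) * ln r0) by ring.
  apply (final_comp v1 d1 K C1); auto; lra.
- replace (2 * (1/2 - 1) * ln r0) with ((1 + 1) * (1/2 - 1) * ln r0) by ring.
  apply (final_comp v2 d2 K C2); auto; lra.
Qed.
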